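(* Let $i\geq1$ and let $T$ be an SSRT of partition shape $\lambda$ such that $\lambda$ has an addable node in column $i+1$. Then, as multisets, $$H_i(\mathrm{tjdt}_{i+1}(T))\cup\{f_{i+1}(T)\}=H_{i+1}(T).$$
   Context: SSRTs (French convention, rows numbered from bottom, $(p,q)$ = row $p$, column $q$): fillings of a partition shape by positive integers weakly decreasing along rows left to right and strictly decreasing up columns. Backward jeu de taquin slide $\mathrm{jdt}_j(T)$ from the addable node in column $j$: the empty box $c=(p,q)$, starting at the addable node, is filled by sliding in the entry from whichever of $(p-1,q)$, $(p,q-1)$ (that exist) holds the smaller entry, ties going to $(p-1,q)$; this repeats until the empty box is $(1,1)$. $H_j(T)$ denotes the multiset of entries of $T$ that move horizontally during the computation of $\mathrm{jdt}_j(T)$, and $H_1(T)=\varnothing$. With $T_{(p,q)}=0$ outside $\lambda$ and $T_{(0,q)}=\infty$, $f_{i+1}(T)=T_{(r,i)}$ where $r$ is the largest integer with $(r,i)\in\lambda$ and $T_{(r,i)}<T_{(r-1,i+1)}$ (the first entry moving horizontally in $\mathrm{jdt}_{i+1}(T)$), and $\mathrm{tjdt}_{i+1}(T)$ is obtained from $T$ by removing $T_{(r,i)}$ and sliding all entries above it in column $i$ down by one row. *)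

(* Defs.v *)
From mathcomp Require Import all_boot.
Set Implicit Arguments. Unset Strict Implicit. Unset Printing Implicit Defensive.

(* Conventions (French, 1-indexed): a shape lam : seq nat lists row lengths,
   row 1 (bottom) first.  Cell (p,q) = row p, column q.  A filling is a
   function T : nat -> nat -> nat (values outside the shape irrelevant). *)

Definition is_part (lam : seq nat) : bool :=
  sorted geq lam && all (fun l => 0 < l) lam.

Definition in_shape (lam : seq nat) (p q : nat) : bool :=
  [&& 0 < p, 0 < q & q <= nth 0 lam p.-1].

Definition colLen (lam : seq nat) (q : nat) : nat := count (fun l => q <= l) lam.

Definition is_SSRT (lam : seq nat) (T : nat -> nat -> nat) : Prop :=
  [/\ is_part lam,
      (forall p q, in_shape lam p q -> 0 < T p q),
      (forall p q, in_shape lam p q.+1 -> T p q.+1 <= T p q) &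
      (forall p q, in_shape lam p.+1 q -> T p.+1 q < T p q)].

Definition addable (lam : seq nat) (r j : nat) : bool :=
  [&& 0 < r, 0 < j, ~~ in_shape lam r j, nth 0 lam r.-1 == j.-1
    & is_part (incr_nth lam r.-1)].

Definition has_addable_col (lam : seq nat) (j : nat) : Prop :=
  exists r, addable lam r j.

Definition slide_upd (S : nat -> nat -> nat) (p q a b v : nat) : nat -> nat -> nat :=
  fun x y => if (x == p) && (y == q) then v
             else if (x == a) && (y == b) then 0 else S x y.

(* Backward jeu de taquin with the empty box at (p,q); returns the list of
   entries that move horizontally, in order. *)
Fixpoint slideH (lam : seq nat) (fuel : nat) (S : nat -> nat -> nat) (p q : nat)
  : seq nat :=
  match fuel with
  | 0 => [::]
  | fuel'.+1 =>
    if (p == 1) && (q == 1) then [::] else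
    let dn := in_shape lam p.-1 q in
    let lf := in_shape lam p q.-1 in
    if lf && (~~ dn || (S p q.-1 < S p.-1 q)) then
      S p q.-1 :: slideH lam fuel' (slide_upd S p q p q.-1 (S p q.-1)) p q.-1
    else if dn then
      slideH lam fuel' (slide_upd S p q p.-1 q (S p.-1 q)) p.-1 q
    else [::]
  end.

(* H_j(T): entries moving horizontally in jdt_j(T), started from the addable
   node of column j, which is the cell (colLen lam j + 1, j); H_1 = empty. *)
Definition Hset (lam : seq nat) (T : nat -> nat -> nat) (j : nat) : seq nat :=
  if j == 1 then [::]
  else let r0 := (colLen lam j).+1 in slideH lam (r0 + j) T r0 j.

Definition Tz (lam : seq nat) (T : nat -> nat -> nat) (p q : nat) : nat :=
  if in_shape lam p q then T p q else 0.

(* condition T_(r,j-1) < T_(r-1,j), with T_(0,j) = infinity *)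
Definition fcond (lam : seq nat) (T : nat -> nat -> nat) (j r : nat) : bool :=
  (r == 1) || (T r j.-1 < Tz lam T r.-1 j).

Definition frow (lam : seq nat) (T : nat -> nat -> nat) (j : nat) : nat :=
  \max_(1 <= r < (colLen lam j.-1).+1 | fcond lam T j r) r.

Definition fval (lam : seq nat) (T : nat -> nat -> nat) (j : nat) : nat :=
  T (frow lam T j) j.-1.

(* tjdt_j(T): remove T_(r,j-1) and slide entries above it in column j-1 down *)
Definition tjdt_shape (lam : seq nat) (j : nat) : seq nat :=
  let c := colLen lam j.-1 in
  [seq l <- set_nth 0 lam c.-1 (nth 0 lam c.-1).-1 | 0 < l].

Definition tjdt (lam : seq nat) (T : nat -> nat -> nat) (j : nat) : nat -> nat -> nat :=
  fun p q => if (q == j.-1) && (frow lam T j <= p) then T p.+1 q else T p q.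

(* Main.v *)
Require Import Defs.
From mathcomp Require Import all_boot zify.
Set Implicit Arguments. Unset Strict Implicit. Unset Printing Implicit Defensive.

Definition agree (S1 S2 : nat -> nat -> nat) p q :=
  forall x y, 0 < x -> x <= p -> y <= q -> x + y < p + q -> S1 x y = S2 x y.

Lemma in_shape_pos lam x y : in_shape lam x y -> 0 < x.
Proof. by case/and3P. Qed.

Lemma slide_upd_other S p q a b v x y :
  ~~ ((x == p) && (y == q)) -> ~~ ((x == a) && (y == b)) -> slide_upd S p q a b v x y = S x y.
Proof. by rewrite /slide_upd => /negbTE -> /negbTE ->. Qed.

Lemma slideH_ext lam1 lam2 : forall fuel S1 S2 p q,
  (forall x y, 0 < x -> x <= p -> y <= q -> x + y < p + q ->
     S1 x y = S2 x y /\ in_shape lam1 x y = in_shape lam2 x y) ->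
  slideH lam1 fuel S1 p q = slideH lam2 fuel S2 p q.
Proof.
elim=> [|fuel IH] S1 S2 p q H //=.
case: ifP => // _.
have Hlf : in_shape lam1 p q.-1 = in_shape lam2 p q.-1.
  case: p q H => [|p] [|q] H //; have [] := H p.+1 q => //; lia.
have Hdn : in_shape lam1 p.-1 q = in_shape lam2 p.-1 q.
  case: p q H {Hlf} => [|[|p]] q H //; have [] := H p.+1 q => //; lia.
rewrite Hlf Hdn.
case: (boolP (in_shape lam2 p q.-1)) => Hl /=.
  have Pp := in_shape_pos Hl.
  have Qq : 0 < q by move: Hl; case: (q) => //; rewrite /in_shape andbF.
  have [E1 _] := H p q.-1 Pp (leqnn _) (leq_pred _) ltac:(lia).
  have E2 : in_shape lam2 p.-1 q -> S1 p.-1 q = S2 p.-1 q.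
    move=> Hd; have Pd := in_shape_pos Hd.
    by have [] := H p.-1 q Pd (leq_pred _) (leqnn _) ltac:(lia).
  have -> : (~~ in_shape lam2 p.-1 q || (S1 p q.-1 < S1 p.-1 q)) =
            (~~ in_shape lam2 p.-1 q || (S2 p q.-1 < S2 p.-1 q)).
    by case: (boolP (in_shape lam2 p.-1 q)) => //= /E2 ->; rewrite E1.
  case: ifP => _.
    rewrite E1; congr (_ :: _); apply: IH => x y x0 xp yq xy.
    rewrite !slide_upd_other; try (apply/negP; case/andP => /eqP ? /eqP ?; lia).
    by apply: H => //; lia.
  case: (boolP (in_shape lam2 p.-1 q)) => // Hd.
  rewrite (E2 Hd); apply: IH => x y x0 xp yq xy.
  rewrite !slide_upd_other; try (apply/negP; case/andP => /eqP ? /eqP ?; lia).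
  by apply: H => //; lia.
case: (boolP (in_shape lam2 p.-1 q)) => // Hd.
have Pd := in_shape_pos Hd.
have [E2 _] := H p.-1 q Pd (leq_pred _) (leqnn _) ltac:(lia).
rewrite E2; apply: IH => x y x0 xp yq xy.
rewrite !slide_upd_other; try (apply/negP; case/andP => /eqP ? /eqP ?; lia).
by apply: H => //; lia.
Qed.

Lemma slideH_col1 lam : forall fuel S p, slideH lam fuel S p 1 = [::].
Proof.
elim=> [|fuel IH] S p //=.
case: ifP => // _.
have -> : in_shape lam p 0 = false by rewrite /in_shape andbF.
by case: ifP.
Qed.

Lemma down_steps lam S0 : forall k fuel S p q,
  agree S S0 p q ->
  (forall m, p - k < m <= p -> [/\ 1 < m, in_shape lam m.-1 q &
       ~~ (in_shape lam m q.-1 && (S0 m q.-1 < S0 m.-1 q))]) ->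
  k <= p ->
  exists S', agree S' S0 (p - k) q /\
     slideH lam (fuel + k) S p q = slideH lam fuel S' (p - k) q.
Proof.
elim=> [|k IH] fuel S p q HS Hm Hk.
  by exists S; rewrite subn0 addn0.
have [H1 H2 H3] := Hm p ltac:(lia).
rewrite addnS /=.
have -> : (p == 1) && (q == 1) = false by apply/negbTE; apply/negP; case/andP => /eqP ? _; lia.
have -> : in_shape lam p q.-1 && (~~ in_shape lam p.-1 q || (S p q.-1 < S p.-1 q)) = false.
  apply/negbTE; rewrite H2 /=.
  case: (boolP (in_shape lam p q.-1)) H3 => //= Hl.
  have Qq : 0 < q by move: Hl; case: (q) => //; rewrite /in_shape andbF.
  rewrite HS ?(HS p.-1 q) //; lia.
rewrite H2.
have [S' [HS' E]] := IH fuel (slide_upd S p q p.-1 q (S p.-1 q)) p.-1 q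
   ltac:(move=> x y x0 xp yq xy; rewrite !slide_upd_other;
         try (apply/negP; case/andP => /eqP ? /eqP ?; lia); apply: HS; lia)
   ltac:(move=> m Hm'; apply: Hm; lia) ltac:(lia).
exists S'; split; first by have -> : p - k.+1 = p.-1 - k by lia.
by rewrite E; have -> : p - k.+1 = p.-1 - k by lia.
Qed.

Lemma colLen_nth lam q x : sorted geq lam -> 0 < q -> 0 < x ->
  (x <= colLen lam q) = (q <= nth 0 lam x.-1).
Proof.
move=> + q0; elim: lam x => [|a l IH] x /= Hs x0.
  by rewrite /colLen /= nth_nil; case: x x0 => //; case: q q0.
have Hl : sorted geq l by exact: path_sorted Hs.
have Hall : all (geq a) l.
  have tr : transitive geq by move=> u v w h1 h2; exact: leq_trans h2 h1.
  exact: (order_path_min tr Hs).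
rewrite /colLen /= -/(colLen l q).
case: (leqP q a) => Hqa /=.
  case: x x0 => [|[|x']] //= _; rewrite add1n ltnS.
  by rewrite (IH x'.+1).
have H0 : colLen l q = 0.
  apply/eqP; rewrite -leqn0 leqNgt -has_count; apply/hasPn => y Hy.
  by rewrite -ltnNge; apply: leq_ltn_trans Hqa; exact: (allP Hall).
rewrite H0; case: x x0 => [|[|x']] //= _.
  by apply/esym/negbTE; rewrite -ltnNge.
apply/esym/negbTE; rewrite -ltnNge; apply: leq_ltn_trans Hqa.
case: (ltnP x' (size l)) => Hx.
  by apply: (allP Hall); exact: mem_nth.
by rewrite nth_default.
Qed.

Lemma bigmax_props (P : pred nat) n :
  let M := \max_(1 <= r < n.+1 | P r) r in
  [/\ M = 0 \/ P M, M <= n & forall m, M < m <= n -> ~~ P m].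
Proof.
elim: n => [|n [IH1 IH2 IH3]] /=.
  by rewrite big_geq //; split => //; [left | move=> m; lia].
rewrite big_mkcond big_nat_recr //= -big_mkcond.
set M := \max_(1 <= r < n.+1 | P r) r in IH1 IH2 IH3 *.
case: (boolP (P n.+1)) => Pn.
  have -> : maxn M n.+1 = n.+1 by apply/maxn_idPr; lia.
  by split => // [|m]; [right | lia].
rewrite maxn0; split => //; first lia.
move=> m Hm; case: (ltnP m n.+1) => Hm2; first by apply: IH3; lia.
by have -> : m = n.+1 by lia.
Qed.

Lemma count_set_nth (a : pred nat) s n y : n < size s ->
  count a (set_nth 0 s n y) + a (nth 0 s n) = count a s + a y.
Proof.
elim: s n => [|b l IH] [|n] //= H.
  lia.
have := IH n H; lia.
Qed.

Lemma filter_pos_nth s : (forall k, k.+1 < size s -> 0 < nth 0 s k) ->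
  forall k, nth 0 [seq l <- s | 0 < l] k = nth 0 s k.
Proof.
elim: s => [|a l IH] //= H k.
case: l IH H => [|b l] IH H.
  by case: a H => [|a] H; case: k => [|[|k]].
have Ha : 0 < a by apply: (H 0).
rewrite Ha; case: k => //= k; apply: IH => k' Hk'.
exact: (H k'.+1).
Qed.

Theorem lemma6p4 (i : nat) (lam : seq nat) (T : nat -> nat -> nat) :
  1 <= i -> is_SSRT lam T -> has_addable_col lam i.+1 ->
  perm_eq (Hset (tjdt_shape lam i.+1) (tjdt lam T i.+1) i ++ [:: fval lam T i.+1])
          (Hset lam T i.+1).
Proof.
move=> Hi [Hpart Hpos Hrow Hcol] [r Hadd].
case/andP: Hpart => Hsort Hallpos.
case/and5P: Hadd => r0 _ _ /eqP Hr _.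
have CL := colLen_nth Hsort.
have ISH : forall x q, 0 < q -> in_shape lam x q = (0 < x) && (x <= colLen lam q).
  move=> x q q0; rewrite /in_shape q0 /=; case: (posnP x) => [->|x0] //=.
  by rewrite CL.
set c := colLen lam i.
have rc : r <= c by rewrite /c CL // Hr.
have c0 : 0 < c by lia.
have Hc : nth 0 lam c.-1 = i.
  apply/eqP; rewrite eqn_leq -CL // leqnn andbT leqNgt; apply/negP => Hlt.
  have : c <= colLen lam i.+1 by rewrite CL.
  have : ~~ (r <= colLen lam i.+1) by rewrite CL // Hr ltnn.
  lia.
have cs : c <= size lam by rewrite /c /colLen count_size.
set r1 := (colLen lam i.+1).+1.
have Hr1 : forall x, 0 < x -> in_shape lam x i.+1 = (x < r1).
  by move=> x x0; rewrite ISH // x0.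
set f := frow lam T i.+1.
have [Mf1 Mf2 Mf3] := bigmax_props (fcond lam T i.+1) c.
rewrite -/(frow lam T i.+1) -/f /= -/c in Mf1 Mf2 Mf3.
have f1 : 0 < f.
  rewrite lt0n; apply/negP => /eqP f0; have := Mf3 1; rewrite f0 /fcond eqxx /=; lia.
have Pf : fcond lam T i.+1 f by case: Mf1 => //; lia.
have fr1 : f <= r1.
  rewrite leqNgt; apply/negP => Hlt; move: Pf; rewrite /fcond /Tz /=.
  have -> : (f == 1) = false by apply/negbTE; lia.
  rewrite Hr1; last lia.
  have -> : (f.-1 < r1) = false by apply/negbTE; lia.
  by rewrite ltn0.
have fv : fval lam T i.+1 = T f i by [].
rewrite fv.
have Hi1 : (i.+1 == 1) = false by rewrite eqSS; case: (i) Hi.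
have HsetO : Hset lam T i.+1 = slideH lam (r1 + i.+1) T r1 i.+1.
  by rewrite /Hset Hi1.
have Hdown := @down_steps lam T (r1 - f) (f + i.+1) T r1 i.+1.
have [|m Hm|//|S' [HS' E1]] := Hdown; first by [].
  have mr : m.-1 < r1 by lia.
  split; [lia | rewrite Hr1 //; lia |].
  rewrite /=; case: (boolP (in_shape lam m i)) => //= Hmi.
  have mc : m <= c by move: Hmi; rewrite ISH //; case/andP.
  have := Mf3 m ltac:(lia); rewrite /fcond /Tz Hr1 ?mr //; last lia.
  by case: (m == 1).
  lia.
rewrite (_ : r1 - (r1 - f) = f) in E1; last lia.
rewrite (_ : r1 + i.+1 = (f + i.+1) + (r1 - f)) in HsetO; last lia.
rewrite HsetO E1.
have fc : f <= c by [].
have Hfi : in_shape lam f i by rewrite ISH // f1.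
rewrite addnS /=.
rewrite Hi1 andbF.
have EfS : S' f i = T f i by apply: HS' => //; lia.
rewrite Hfi /= EfS.
have -> : (~~ in_shape lam f.-1 i.+1 || (T f i < S' f.-1 i.+1)) = true.
  case: (boolP (in_shape lam f.-1 i.+1)) => //= Hd.
  have Pd := in_shape_pos Hd.
  rewrite HS' //; try lia.
  move: Pf; rewrite /fcond /Tz Hd /=; have -> : (f == 1) = false by apply/negbTE; lia.
  by [].
set S1 := slide_upd S' f i.+1 f i (T f i).
have HS1 : agree S1 T f i.
  move=> x y x0 xf yi xy; rewrite /S1 !slide_upd_other;
    try (apply/negP; case/andP => /eqP ? /eqP ?; lia); apply: HS'; lia.
case: (ltnP 1 i) => [i2|i1]; last first.
  have -> : i = 1 by lia.
  by rewrite slideH_col1 /Hset eqxx.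
set s := set_nth 0 lam c.-1 (nth 0 lam c.-1).-1.
have Hlam' : tjdt_shape lam i.+1 = [seq l <- s | 0 < l] by [].
have ss : size s = size lam by rewrite size_set_nth; apply/maxn_idPr; lia.
have Hs : forall k, nth 0 s k = if k == c.-1 then i.-1 else nth 0 lam k.
  by move=> k; rewrite nth_set_nth /= Hc.
have L1 : forall k, nth 0 [seq l <- s | 0 < l] k = nth 0 s k.
  apply: filter_pos_nth => k; rewrite ss Hs => Hk.
  case: ifP => _; first lia.
  by apply: (all_nthP 0 Hallpos); lia.
have L2 : forall x y, in_shape [seq l <- s | 0 < l] x y =
    in_shape lam x y && ~~ ((x == c) && (y == i)).
  move=> x y; rewrite /in_shape L1 Hs.
  case: (posnP x) => [->|x0] //=; case: (posnP y) => [->|y0] //=.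
  case: (eqVneq x c) => [->|xc] /=.
    by rewrite eqxx Hc; case: (ltngtP y i) => //= H; lia.
  have -> : (x.-1 == c.-1) = false by apply/negbTE; lia.
  by rewrite andbT.
have L3 : colLen [seq l <- s | 0 < l] i = c.-1.
  rewrite /colLen count_filter.
  rewrite (@eq_count _ _ (fun l => i <= l)); last first.
    by move=> l /=; case: (posnP l) => [->|] /=; [rewrite leqNgt Hi | rewrite andbT].
  have := count_set_nth (fun l => i <= l) (nth 0 lam c.-1).-1 (s:=lam) (n:=c.-1) ltac:(lia).
  rewrite -/s Hc leqnn /= -/(colLen lam i) -/c.
  have -> : (i <= i.-1) = false by apply/negbTE; lia.
  lia.
rewrite Hlam' /Hset L3.
have -> : (i == 1) = false by apply/negbTE; lia.
rewrite (_ : c.-1.+1 = c); last lia.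
set lam' := [seq l <- s | 0 < l].
set T' := tjdt lam T i.+1.
have Hdown2 := @down_steps lam' T' (c - f) (f + i) T' c i.
have [|m Hm|//|S'' [HS'' E2]] := Hdown2; first by [].
  have mc : m <= c by lia.
  split; first lia.
    rewrite L2 ISH; last lia.
    have -> : (m.-1 == c) = false by apply/negbTE; lia.
    by rewrite /= andbT; apply/andP; split; lia.
  rewrite /T' /tjdt /=.
  have -> : (i.-1 == i) = false by apply/negbTE; lia.
  rewrite eqxx /= (_ : f <= m.-1); last lia.
  rewrite (_ : m.-1.+1 = m); last lia.
  apply/negP; case/andP => _; rewrite ltnNge; apply/negP; apply/negPn.
  have := Hrow m i.-1; rewrite (_ : i.-1.+1 = i); last lia.
  by apply; rewrite ISH; [apply/andP; split; lia | lia].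
  lia.
rewrite (_ : c - (c - f) = f) in E2 HS''; last lia.
rewrite (_ : c + i = (f + i) + (c - f)); last lia.
rewrite E2 cats1 perm_rcons.
rewrite (@slideH_ext lam' lam (f + i) S'' S1 f i); first exact: perm_refl.
move=> x y x0 xf yi xy; split.
  rewrite (HS'' x y) // (HS1 x y) // /T' /tjdt /=.
  case: (eqVneq y i) => [Ey|] //=.
  by rewrite (_ : f <= x = false) //; apply/negbTE; lia.
rewrite L2; case: (eqVneq x c) => [Ex|] /=; last by rewrite andbT.
case: (eqVneq y i) => [Ey|] /=; last by rewrite andbT.
lia.
Qed.
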